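(* Let $n\ge1$ and let $\mathbf{v},\mathbf{w}\in\{0,1\}^n$ be coordinates in multi-degree $\mathbf{1}_n$ of $\mathcal{L}^{\mathbb{Q}}_{T^n}(\mathbb{Q}[t];\mathbb{Q})$, and $x,y\in\mathbb{Q}[t]$. In the total complex $\mathrm{Tot}(\mathcal{L}^{\mathbb{Q}}_{T^n}(\mathbb{Q}[t];\mathbb{Q}))$: (1) If $\mathbf{v}$ and $\mathbf{w}$ are both $0$ in the $i$th place for some $1\le i\le n$, then $x_{\mathbf{v}}\cdot y_{\mathbf{w}}\sim0$. In particular, if $\mathbf{v}\neq\mathbf{1}_n$ then $x_{\mathbf{v}}\sim0$. (2) In general, \[x_{\mathbf{v}}\cdot y_{\mathbf{w}}\sim\sum_{\substack{\mathbf{v}'\le\mathbf{v},\ \mathbf{w}'\le\mathbf{w},\\ \mathbf{v}'+\mathbf{w}'=\mathbf{1}_n}}x_{\mathbf{v}'}\cdot y_{\mathbf{w}'},\] the sum over all pairs of coordinates $\mathbf{v}',\mathbf{w}'\in\{0,1\}^n$ that are place-wise no greater than $\mathbf{v}$, $\mathbf{w}$ respectively and take the value $1$ in complementary places. (3) For $k\ge1$, \[(t^k)_{\mathbf{1}_n}\sim\sum_{\substack{\mathbf{w}_1,\dots,\mathbf{w}_k\neq\mathbf{0}_n,\\ \mathbf{w}_1+\cdots+\mathbf{w}_k=\mathbf{1}_n}}\prod_{i=1}^kt_{\mathbf{w}_i},\] the sum over ordered $k$-tuples of nonzero coordinates in $\{0,1\}^n$. In particular, if $k=n$ and $\mathbf{e}_i$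 denotes the coordinate with $1$ in the $i$th place and $0$ elsewhere, then $(t^n)_{\mathbf{1}_n}\sim n!\prod_{i=1}^nt_{\mathbf{e}_i}$; and if $k>n$ then $(t^k)_{\mathbf{1}_n}\sim0$.
   Context: The $n$-chain complex $\mathcal{L}^{\mathbb{Q}}_{T^n}(\mathbb{Q}[t];\mathbb{Q})$ (Loday construction of $\mathbb{Q}[t]$ over the $n$-fold product of simplicial circles, with coefficients in $\mathbb{Q}$ via $t\mapsto0$): in multi-degree $\mathbf{V}\in\mathbb{N}^n$, elements are sums of multi-matrices of size $(v_1+1)\times\cdots\times(v_n+1)$ with entries in $\mathbb{Q}[t]$ at coordinates $\mathbf{v}\ne\mathbf{0}_n$ ($\mathbf{0}\le\mathbf{v}\le\mathbf{V}$) and in $\mathbb{Q}$ at $\mathbf{0}_n$ (tensors over $\mathbb{Q}$). In direction $i$ the slices are indexed by $j\in\{0,\dots,v_i\}$; $d_{i,j}$ ($j<v_i$) multiplies slices $j$ and $j+1$ entrywise, $d_{i,v_i}$ multiplies slice $v_i$ into slice $0$; $\mathrm{d}_i=\sum_j(-1)^jd_{i,j}$ and the total differential is $\mathrm{d}=\sum_i(-1)^{v_1+\cdots+v_{i-1}}\mathrm{d}_i$; $\sim$ means differing by a boundary. $\mathbf{0}_n,\mathbf{1}_n$ are constant vectors; for $x\in\mathbb{Q}[t]$, $x_{\mathbf{v}}$ is the multi-matrix with $x$ at $\mathbf{v}$ (its image in $\mathbb{Q}$ if $\mathbf{v}=\mathbf{0}_n$) and $1$ elsewhere, and products such as $x_{\mathbf{v}}\cdot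 y_{\mathbf{w}}$ or $\prod_it_{\mathbf{w}_i}$ are entrywise products of multi-matrices. Sums and inequalities of coordinates are place-wise. *)

(* Defs.v *)
From mathcomp Require Import all_boot all_algebra.
From mathcomp Require Import mpoly.
Set Implicit Arguments. Unset Strict Implicit. Unset Printing Implicit Defensive.
Import GRing.Theory.
Local Open Scope ring_scope.

(* Model of the n-chain complex L^Q_{T^n}(Q[t];Q).                         *)
(* A multi-degree is V : {ffun 'I_n -> nat}.  A coordinate is a function    *)
(* w : 'I_n -> 'I_b.+1 (b is a global bound on the entries, which must     *)
(* exceed every entry of every multi-degree considered).  The component    *)
(* in multi-degree V is the tensor product over Q of one copy of Q[t] for  *)
(* each coordinate 0 <> w <= V (and of Q at w = 0), i.e. the polynomial    *)
(* ring Q[t_w : 0 <> w <= V].  We realise all components inside the single *)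
(* polynomial ring Q[t_w : w coordinate] (variable t_w = 'X_(enum_rank w)) *)
(* and cut out the component of multi-degree V by a support condition.     *)

Definition mdeg (n : nat) := {ffun 'I_n -> nat}.
Definition crd (n b : nat) := {ffun 'I_n -> 'I_b.+1}.
Definition NV (n b : nat) := #|{: crd n b}|.
Definition Pol (n b : nat) := {mpoly rat[NV n b]}.

Definition tv (n b : nat) (w : crd n b) : Pol n b := 'X_(enum_rank w).

Definition crd_nz (n b : nat) (w : crd n b) : bool := [exists i, (w i : nat) != 0%N].
Definition crd_le (n b : nat) (w : crd n b) (V : mdeg n) : bool :=
  [forall i, (w i <= V i)%N].

Definition inC (n b : nat) (V : mdeg n) (p : Pol n b) : Prop :=
  forall m, m \in msupp p -> forall w : crd n b,
    (m (enum_rank w) != 0)%N -> crd_nz w && crd_le w V.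

(* Effect of the face d_{i,j} (source multi-degree V, 0 <= j <= V_i) on   *)
(* coordinates: for j < V_i slices j and j+1 are merged, for j = V_i the  *)
(* slice V_i is multiplied into slice 0.                                  *)
Definition face_crd (n b : nat) (V : mdeg n) (i : 'I_n) (j : nat) (w : crd n b)
  : crd n b :=
  [ffun k => if k == i then
               inord (if (j < V i)%N then (if (w k <= j)%N then (w k : nat) else (w k).-1)
                      else (if (w k : nat) == V i then 0%N else (w k : nat)))
             else w k].

(* d_{i,j} : the algebra map t_w |-> t_{face w}, where t_0 means 0 (the   *)
(* entry at the base point lies in Q, and t acts on Q by 0).               *)
Definition dface (n b : nat) (V : mdeg n) (i : 'I_n) (j : nat) (p : Pol n b)
  : Pol n b :=
  mmap (@mpolyC (NV n b) rat)
    (fun k : 'I_(NV n b) =>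
       let u := face_crd V i j (enum_val k) in if crd_nz u then tv u else 0) p.

Definition dir_d (n b : nat) (V : mdeg n) (i : 'I_n) (p : Pol n b) : Pol n b :=
  \sum_(j < (V i).+1) (-1) ^+ j * dface V i j p.

Definition addE (n : nat) (U : mdeg n) (i : 'I_n) : mdeg n :=
  [ffun k => if k == i then (U k).+1 else U k].

Definition tdeg (n : nat) (V : mdeg n) : nat := (\sum_(i < n) V i)%N.

(* A chain of the total complex: a family of elements indexed by          *)
(* multi-degrees (only those of the relevant total degree matter).       *)
Definition dtot (n b : nat) (z : mdeg n -> Pol n b) (U : mdeg n) : Pol n b :=
  \sum_(i < n) (-1) ^+ (\sum_(l < n | (l < i)%N) U l)%N * dir_d (addE U i) i (z (addE U i)).

Definition one_md (n : nat) : mdeg n := [ffun => 1%N].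

(* Entries of multi-degrees of total degree <= n+1 are <= n+1, so the    *)
(* bound b = n.+1 (entries in 'I_(n+2)) is enough.                        *)
Definition homol (n : nat) (p q : Pol n n.+1) : Prop :=
  exists z : mdeg n -> Pol n n.+1,
    (forall V, tdeg V = n.+1 -> inC V (z V)) /\
    (forall U, tdeg U = n -> dtot z U = (if U == one_md n then p - q else 0)).

Definition bv (n : nat) := {ffun 'I_n -> bool}.
Definition bcrd (n b : nat) (v : bv n) : crd n b := [ffun i => inord (nat_of_bool (v i))].
Definition bv_nz (n : nat) (v : bv n) : bool := [exists i, v i].

(* x_v : the multi-matrix with x at v (its image x(0) in Q if v = 0)      *)
(* and 1 elsewhere.                                                        *)
Definition xat (n : nat) (x : {poly rat}) (v : bv n) : Pol n n.+1 :=
  if bv_nz v then (map_poly (@mpolyC (NV n n.+1) rat) x).[tv (bcrd n.+1 v)]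
  else (x.[0]) %:MP_[NV n n.+1].

Definition bv_one (n : nat) : bv n := [ffun => true].
Definition bv_e (n : nat) (i : 'I_n) : bv n := [ffun j => j == i].

(* Main.v *)
Require Import Defs.
From mathcomp Require Import all_boot all_algebra.
From mathcomp Require Import mpoly.
From mathcomp Require Import ring.
From mathcomp Require Import fingroup perm.
Set Implicit Arguments. Unset Strict Implicit. Unset Printing Implicit Defensive.
Import GRing.Theory.
Local Open Scope ring_scope.

Section S.
Variable n : nat.
Local Notation N := (NV n n.+1).
Local Notation P := (Pol n n.+1).
Local Notation C := (crd n n.+1).
Implicit Types (V W U : Defs.mdeg n).

Lemma inC0 V : inC V (0 : P).
Proof. by move=> m; rewrite msupp0. Qed.

Lemma inCC V c : inC V (c%:MP : P).
Proof.
move=> m; rewrite msuppC; case: (c == 0) => //; rewrite mem_seq1 => /eqP -> w.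
by rewrite mnm0E.
Qed.

Lemma inC1 V : inC V (1 : P).
Proof. by rewrite -mpolyC1; apply: inCC. Qed.

Lemma inCD V (p q : P) : inC V p -> inC V q -> inC V (p + q).
Proof.
move=> hp hq m /msuppD_le; rewrite mem_cat => /orP [] ? ; [exact: hp | exact: hq].
Qed.

Lemma inCN V (p : P) : inC V p -> inC V (- p).
Proof. by move=> hp m; rewrite (perm_mem (msuppN p)); exact: hp. Qed.

Lemma inCM V (p q : P) : inC V p -> inC V q -> inC V (p * q).
Proof.
move=> hp hq m /msuppM_le /allpairsP [[m1 m2] /= [h1 h2 ->]] w.
rewrite mnmDE addn_eq0 negb_and => /orP [] ?; [exact: (hp m1) | exact: (hq m2)].
Qed.

Lemma inCX V (u : C) : crd_nz u && crd_le u V -> inC V (tv u).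
Proof.
move=> hu m; rewrite /tv msuppX mem_seq1 => /eqP -> w.
rewrite mnm1E; case: (enum_rank u =P enum_rank w) => // e _; rewrite -(enum_rank_inj e); exact: hu.
Qed.

Lemma inC_sum V (I : Type) (r : seq I) (Pr : pred I) (F : I -> P) :
  (forall i, Pr i -> inC V (F i)) -> inC V (\sum_(i <- r | Pr i) F i).
Proof.
move=> h; apply: (big_ind (inC V)) => //; [exact: inC0 | exact: inCD].
Qed.

Lemma inC_prod V (I : Type) (r : seq I) (Pr : pred I) (F : I -> P) :
  (forall i, Pr i -> inC V (F i)) -> inC V (\prod_(i <- r | Pr i) F i).
Proof.
move=> h; apply: (big_ind (inC V)) => //; [exact: inC1 | exact: inCM].
Qed.

Lemma inCXn V (p : P) k : inC V p -> inC V (p ^+ k).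
Proof.
move=> hp; elim: k => [|k ih]; first by rewrite expr0; exact: inC1.
by rewrite exprS; apply: inCM.
Qed.


Local Notation MC := (@mpolyC N rat).

Definition allowed (V : Defs.mdeg n) (u : C) := crd_nz u && crd_le u V.

Lemma inC_mmap V W (p : P) (g : 'I_N -> P) :
  inC V p -> (forall u, allowed V u -> inC W (g (enum_rank u))) ->
  inC W (mmap MC g p).
Proof.
move=> hp hg; rewrite /mmap big_seq; apply: inC_sum => m hm.
apply: inCM; first exact: inCC.
rewrite /mmap1; apply: inC_prod => k _.
case: (m k =P 0%N) => [->|/eqP mk]; first by rewrite expr0; exact: inC1.
apply: inCXn; rewrite -(enum_valK k); apply: hg.
by apply: (hp m hm); rewrite enum_valK.
Qed.

Lemma mmap_eqC V (p : P) (g1 g2 : 'I_N -> P) :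
  inC V p -> (forall u, allowed V u -> g1 (enum_rank u) = g2 (enum_rank u)) ->
  mmap MC g1 p = mmap MC g2 p.
Proof.
move=> hp hg; rewrite /mmap !big_seq; apply: eq_bigr => m hm; congr (_ * _).
rewrite /mmap1; apply: eq_bigr => k _.
case: (m k =P 0%N) => [->|/eqP mk]; first by rewrite !expr0.
rewrite -(enum_valK k) hg //.
by apply: (hp m hm); rewrite enum_valK.
Qed.

Lemma mmap_id (p : P) : mmap MC (fun k => 'X_k) p = p.
Proof.
rewrite /mmap; under eq_bigr do rewrite mmap1_id mul_mpolyC.
by rewrite -mpolyE.
Qed.

Lemma mmap_Xk (g : 'I_N -> P) k : mmap MC g 'X_k = g k.
Proof. by rewrite mmapX mmap1U. Qed.

Lemma mmap_comp (g h : 'I_N -> P) (p : P) :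
  mmap MC g (mmap MC h p) = mmap MC (fun k => mmap MC g (h k)) p.
Proof.
rewrite [mmap MC h p]/mmap rmorph_sum /mmap; apply: eq_bigr => m _.
rewrite rmorphM /= mmapC; congr (_ * _).
by rewrite /mmap1 rmorph_prod; apply: eq_bigr => k _; rewrite rmorphXn.
Qed.


Definition Vi (i : 'I_n) := addE (one_md n) i.
Definition clr (i : 'I_n) (u : C) : C := [ffun k => if k == i then ord0 else u k].
Definition lift2 (i : 'I_n) (u : C) : C :=
  [ffun k => if k == i then inord (2 * u k) else u k].

Lemma Vi_i i : Vi i i = 2%N.
Proof. by rewrite /Vi /addE !ffunE eqxx. Qed.

Lemma Vi_j i j : j != i -> Vi i j = 1%N.
Proof. by move=> /negbTE h; rewrite /Vi /addE !ffunE h. Qed.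

Lemma le1 (u : C) : crd_le u (one_md n) -> forall k, (u k <= 1)%N.
Proof. by move=> /forallP h k; have := h k; rewrite ffunE. Qed.

Ltac fcrd h u i := apply/ffunP => k; rewrite !ffunE; case: eqP => [->|//]; rewrite ?eqxx /=;
  apply/val_inj => /=; move: (le1 h i); case: (u i) => [[|[|m]] Hm] //= _; rewrite ?inordK //.

Lemma F0 i (u : C) : crd_le u (one_md n) -> face_crd (Vi i) i 0 u = clr i u.
Proof. move=> h; fcrd h u i. Qed.

Lemma F1 i (u : C) : crd_le u (one_md n) -> face_crd (Vi i) i 1 u = u.
Proof. move=> h; fcrd h u i. Qed.

Lemma F2 i (u : C) : crd_le u (one_md n) -> face_crd (Vi i) i 2 u = u.
Proof. move=> h; fcrd h u i. Qed.


Ltac gcrd h u i := apply/ffunP => k; rewrite !ffunE; case: eqP => [->|//]; rewrite ?eqxx /=;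
  apply/val_inj => /=; move: (le1 h i); case: (u i) => [[|[|m]] Hm] //= _;
  rewrite ?inordK //= ?ltnS //= ?inordK //= ?ltnS //=.

Lemma G0 i (u : C) : (0 < n)%N -> crd_le u (one_md n) -> face_crd (Vi i) i 0 (lift2 i u) = u.
Proof. move=> hn h; gcrd h u i. Qed.

Lemma G1 i (u : C) : (0 < n)%N -> crd_le u (one_md n) -> face_crd (Vi i) i 1 (lift2 i u) = u.
Proof. move=> hn h; gcrd h u i. Qed.

Lemma G2 i (u : C) : (0 < n)%N -> crd_le u (one_md n) -> face_crd (Vi i) i 2 (lift2 i u) = clr i u.
Proof. move=> hn h; gcrd h u i. Qed.


Lemma Fj V j (u : C) : V j = 1%N -> crd_le u V -> face_crd V j 0 u = face_crd V j 1 u.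
Proof.
move=> hV /forallP h; apply/ffunP => k; rewrite !ffunE; case: eqP => [->|//].
rewrite hV /=; apply/val_inj => /=; move: (h j); rewrite hV.
by case: (u j) => [[|[|m]] Hm] //= _.
Qed.

Definition tvz (u : C) : P := if crd_nz u then tv u else 0.

Lemma dfaceE V i j (p : P) :
  dface V i j p = mmap MC (fun k => tvz (face_crd V i j (enum_val k))) p.
Proof. by []. Qed.

Lemma dd_zero V j (p : P) : V j = 1%N -> inC V p -> dir_d V j p = 0.
Proof.
move=> hV hp; rewrite /dir_d hV !big_ord_recr big_ord0 /= expr0 expr1 mul1r mulN1r add0r.
rewrite !dfaceE (mmap_eqC (g2 := fun k => tvz (face_crd V j 1 (enum_val k))) hp) ?subrr //.
by move=> u /andP [_ hu]; rewrite enum_rankK (Fj hV hu).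
Qed.

Lemma inC_mono V W (p : P) : inC V p -> (forall u, allowed V u -> allowed W u) -> inC W p.
Proof. by move=> hp hVW m hm w hw; apply: hVW; exact: (hp m hm w hw). Qed.

Lemma allowed_Vi i u : allowed (one_md n) u -> allowed (Vi i) u.
Proof.
move=> /andP [hz /forallP hl]; rewrite /allowed hz /=; apply/forallP => k.
have := hl k; rewrite /Vi /addE !ffunE; case: (k == i) => //= h; exact: leqW.
Qed.

Lemma allowed_lift2 i u : (0 < n)%N -> allowed (one_md n) u -> allowed (Vi i) (lift2 i u).
Proof.
move=> hn /andP [/existsP [k0 hk0] hl]; apply/andP; split.
  apply/existsP; exists k0; rewrite ffunE; case: (k0 =P i) => [e|//]; subst k0.
  move: hk0 (le1 hl i); case: (u i) => [[|[|m]] Hm] //= _ _; rewrite inordK //= !ltnS //.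
apply/forallP => k; rewrite !ffunE; case: (k =P i) => [e|ne].
  subst k; rewrite ?eqxx; move: (le1 hl i); case: (u i) => [[|[|m]] Hm] //= _; rewrite inordK //= !ltnS //.
exact: le1 hl k.
Qed.


Definition Zm i (p : P) := mmap MC (fun k => tvz (clr i (enum_val k))) p.
Definition Lm i (p : P) := mmap MC (fun k => tv (lift2 i (enum_val k))) p.

Lemma tvz_allowed V u : allowed V u -> tvz u = 'X_(enum_rank u).
Proof. by move=> /andP [h _]; rewrite /tvz h. Qed.

Lemma allowed_le1 u : allowed (one_md n) u -> crd_le u (one_md n).
Proof. by case/andP. Qed.

Lemma d0Q i (Q : P) : inC (one_md n) Q -> dface (Vi i) i 0 Q = Zm i Q.
Proof.
move=> hQ; rewrite dfaceE /Zm; apply: (mmap_eqC hQ) => u hu.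
by rewrite enum_rankK F0 // allowed_le1.
Qed.

Lemma d1Q i (Q : P) : inC (one_md n) Q -> dface (Vi i) i 1 Q = Q.
Proof.
move=> hQ; rewrite dfaceE -[RHS]mmap_id; apply: (mmap_eqC hQ) => u hu.
by rewrite enum_rankK F1 ?allowed_le1 // (tvz_allowed hu).
Qed.

Lemma d2Q i (Q : P) : inC (one_md n) Q -> dface (Vi i) i 2 Q = Q.
Proof.
move=> hQ; rewrite dfaceE -[RHS]mmap_id; apply: (mmap_eqC hQ) => u hu.
by rewrite enum_rankK F2 ?allowed_le1 // (tvz_allowed hu).
Qed.

Lemma d0L i (R : P) : (0 < n)%N -> inC (one_md n) R -> dface (Vi i) i 0 (Lm i R) = R.
Proof.
move=> hn hR; rewrite dfaceE /Lm mmap_comp -[RHS]mmap_id; apply: (mmap_eqC hR) => u hu.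
by rewrite enum_rankK /tv mmap_Xk enum_rankK G0 ?allowed_le1 // (tvz_allowed hu).
Qed.

Lemma d1L i (R : P) : (0 < n)%N -> inC (one_md n) R -> dface (Vi i) i 1 (Lm i R) = R.
Proof.
move=> hn hR; rewrite dfaceE /Lm mmap_comp -[RHS]mmap_id; apply: (mmap_eqC hR) => u hu.
by rewrite enum_rankK /tv mmap_Xk enum_rankK G1 ?allowed_le1 // (tvz_allowed hu).
Qed.

Lemma d2L i (R : P) : (0 < n)%N -> inC (one_md n) R -> dface (Vi i) i 2 (Lm i R) = Zm i R.
Proof.
move=> hn hR; rewrite dfaceE /Lm mmap_comp /Zm; apply: (mmap_eqC hR) => u hu.
by rewrite enum_rankK /tv mmap_Xk enum_rankK G2 ?allowed_le1.
Qed.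

Lemma inC_Lm i (R : P) : (0 < n)%N -> inC (one_md n) R -> inC (Vi i) (Lm i R).
Proof.
move=> hn hR; apply: (inC_mmap hR) => u hu; rewrite enum_rankK; apply: inCX.
exact: allowed_lift2.
Qed.

Lemma dir_d_Vi i (p : P) :
  dir_d (Vi i) i p = dface (Vi i) i 0 p - dface (Vi i) i 1 p + dface (Vi i) i 2 p.
Proof.
rewrite /dir_d Vi_i !big_ord_recr big_ord0 /= expr0 expr1 sqrrN expr1n !mul1r mulN1r add0r.
by [].
Qed.

Lemma dfaceM V i j (p q : P) : dface V i j (p * q) = dface V i j p * dface V i j q.
Proof. by rewrite !dfaceE rmorphM. Qed.


Definition Bd (r : P) := exists z : Defs.mdeg n -> P,
    (forall V, tdeg V = n.+1 -> inC V (z V)) /\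
    (forall U, tdeg U = n -> dtot z U = (if U == one_md n then r else 0)).

Lemma dir_dD V j (p q : P) : dir_d V j (p + q) = dir_d V j p + dir_d V j q.
Proof. by rewrite /dir_d -big_split; apply: eq_bigr => k _; rewrite !dfaceE raddfD mulrDr. Qed.

Lemma dir_dN V j (p : P) : dir_d V j (- p) = - dir_d V j p.
Proof. by rewrite /dir_d -sumrN; apply: eq_bigr => k _; rewrite !dfaceE raddfN mulrN. Qed.

Lemma dir_d0 V j : dir_d V j (0 : P) = 0.
Proof. by rewrite /dir_d big1 // => k _; rewrite !dfaceE raddf0 mulr0. Qed.

Lemma dtotD (z1 z2 : Defs.mdeg n -> P) U :
  dtot (fun V => z1 V + z2 V) U = dtot z1 U + dtot z2 U.
Proof. by rewrite /dtot -big_split; apply: eq_bigr => j _ /=; rewrite dir_dD mulrDr. Qed.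

Lemma dtotN (z : Defs.mdeg n -> P) U : dtot (fun V => - z V) U = - dtot z U.
Proof. by rewrite /dtot -sumrN; apply: eq_bigr => j _ /=; rewrite dir_dN mulrN. Qed.

Lemma Bd0 : Bd 0.
Proof.
exists (fun _ => 0); split => [V _|U _]; first exact: inC0.
rewrite /dtot big1 ?if_same // => j _; by rewrite dir_d0 mulr0.
Qed.

Lemma BdD r1 r2 : Bd r1 -> Bd r2 -> Bd (r1 + r2).
Proof.
move=> [z1 [h1 e1]] [z2 [h2 e2]]; exists (fun V => z1 V + z2 V); split.
  by move=> V hV; apply: inCD; [exact: h1 | exact: h2].
move=> U hU; rewrite dtotD e1 // e2 //; by case: (U == one_md n); rewrite ?addr0.
Qed.

Lemma BdN r : Bd r -> Bd (- r).
Proof.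
move=> [z [h e]]; exists (fun V => - z V); split.
  by move=> V hV; apply: inCN; exact: h.
move=> U hU; rewrite dtotN e //; by case: (U == one_md n); rewrite ?oppr0.
Qed.

Lemma BdB r1 r2 : Bd r1 -> Bd r2 -> Bd (r1 - r2).
Proof. by move=> h1 h2; apply: BdD => //; apply: BdN. Qed.

Lemma Bd_sum (I : Type) (r : seq I) (Pr : pred I) (F : I -> P) :
  (forall i, Pr i -> Bd (F i)) -> Bd (\sum_(i <- r | Pr i) F i).
Proof. by move=> h; apply: (big_ind Bd) => //; [exact: Bd0 | exact: BdD]. Qed.

Lemma Bd_sign k r : Bd ((-1) ^+ k * r) -> Bd r.
Proof.
rewrite -signr_odd; case: (odd k); rewrite ?expr0 ?expr1 ?mul1r ?mulN1r //.
by move=> /BdN; rewrite opprK.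
Qed.

Lemma addE_inj U U' i : addE U i = addE U' i -> U = U'.
Proof.
move=> e; apply/ffunP => k; have := congr1 (fun f : Defs.mdeg n => f k) e; rewrite !ffunE.
by case: (k == i) => // [[]].
Qed.

Lemma Bd_gen i (zv : P) : inC (Vi i) zv -> Bd (dir_d (Vi i) i zv).
Proof.
move=> hz; apply: (@Bd_sign (\sum_(l < n | (l < i)%N) one_md n l)%N).
exists (fun V => if V == Vi i then zv else 0); split.
  by move=> V _; case: eqP => [-> // | _]; exact: inC0.
move=> U hU; rewrite /dtot (bigD1 i) //= [X in _ + X = _]big1 ?addr0; last first.
  move=> j hj; case: (addE U j =P Vi i) => [e|_]; last by rewrite dir_d0 mulr0.
  rewrite e dd_zero ?mulr0 //; exact: Vi_j.
case: (U =P one_md n) => [->|ne]; first by rewrite /Vi !eqxx.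
case: (addE U i =P Vi i) => [e|_]; last by rewrite dir_d0 mulr0.
by case: ne; apply: (@addE_inj _ _ i).
Qed.


Lemma K i (Q R : P) : (0 < n)%N -> inC (one_md n) Q -> inC (one_md n) R ->
  Bd (Zm i Q * R - Q * R + Q * Zm i R).
Proof.
move=> hn hQ hR.
have := @Bd_gen i (Q * Lm i R); rewrite dir_d_Vi !dfaceM d0Q // d1Q // d2Q //.
rewrite d0L // d1L // d2L //; apply; apply: inCM; last exact: inC_Lm.
apply: (inC_mono hQ); exact: allowed_Vi.
Qed.

Definition clrb (i : 'I_n) (v : bv n) : bv n := [ffun k => (k != i) && v k].

Lemma bcrdE (v : bv n) k : (bcrd n.+1 v k : nat) = v k.
Proof. by rewrite ffunE inordK //; case: (v k). Qed.

Lemma crd_nz_bcrd (v : bv n) : crd_nz (bcrd n.+1 v) = bv_nz v.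
Proof.
apply/existsP/existsP => [[k hk]|[k hk]]; exists k; move: hk; rewrite bcrdE //.
  by case: (v k).
by move=> ->.
Qed.

Lemma allowed_bcrd (v : bv n) : bv_nz v -> allowed (one_md n) (bcrd n.+1 v).
Proof.
move=> h; rewrite /allowed crd_nz_bcrd h /=; apply/forallP => k.
by rewrite bcrdE ffunE; case: (v k).
Qed.

Lemma inC_xat x (v : bv n) : inC (one_md n) (xat x v).
Proof.
rewrite /xat; case: ifP => h; last exact: inCC.
rewrite horner_coef; apply: inC_sum => k _; apply: inCM.
  rewrite coef_map /=; exact: inCC.
by apply: inCXn; apply: inCX; apply: allowed_bcrd.
Qed.

Lemma clr_bcrd i (v : bv n) : clr i (bcrd n.+1 v) = bcrd n.+1 (clrb i v).
Proof.
apply/ffunP => k; rewrite !ffunE; case: (k =P i) => [->|ne] /=; apply/val_inj; rewrite /= inordK //.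
by case: (v k).
Qed.

Lemma Zm_rmorph i : Zm i = mmap MC (fun k => tvz (clr i (enum_val k))).
Proof. by []. Qed.

Lemma Zm_xat i x (v : bv n) : Zm i (xat x v) = xat x (clrb i v).
Proof.
rewrite /xat; case: ifP => h; last first.
  have -> : bv_nz (clrb i v) = false.
    apply/negbTE/negP => /existsP [k]; rewrite ffunE => /andP [_ hk].
    by move/negbT: h => /existsP; apply; exists k.
  by rewrite /Zm mmapC.
rewrite /Zm -horner_map /= -map_poly_comp.
rewrite (@eq_map_poly _ _ _ MC); last by move=> c /=; rewrite mmapC.
rewrite /tv mmap_Xk enum_rankK clr_bcrd /tvz crd_nz_bcrd.
case: ifP => // _.
by rewrite -mpolyC0 horner_map.
Qed.


Lemma Zm_prod i (I : Type) (r : seq I) (Pp : pred I) (F : I -> P) :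
  Zm i (\prod_(j <- r | Pp j) F j) = \prod_(j <- r | Pp j) Zm i (F j).
Proof. by rewrite /Zm rmorph_prod. Qed.

Lemma Zm1 i : Zm i 1 = 1.
Proof. by rewrite /Zm rmorph1. Qed.

Section Prod.
Variable k : nat.
Variable X : 'I_k -> {poly rat}.
Local Notation FV := {ffun 'I_k -> bv n}.

Definition Pr (V : FV) : P := \prod_(l < k) xat (X l) (V l).
Definition validW (W : FV) := [forall i, (\sum_(l < k) nat_of_bool (W l i) == 1)%N].
Definition leW (W V : FV) := [forall l, forall i, W l i ==> V l i].
Definition T (V : FV) := \sum_(W : FV | leW W V && validW W) Pr W.
Definition meas (V : FV) := #|[set p : 'I_k * 'I_n | V p.1 p.2]|.

Lemma leWP (W V : FV) : reflect (forall l i, W l i -> V l i) (leW W V).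
Proof.
apply: (iffP forallP) => [h l i|h l]; first exact/implyP/(forallP (h l) i).
by apply/forallP => i; apply/implyP; exact: h.
Qed.

Lemma leW_app (W V : FV) : leW W V -> forall l i, W l i -> V l i.
Proof. by move/leWP. Qed.
Arguments leW_app [W V] _ l i _.

Lemma sumb_two (b : 'I_k -> bool) l1 l2 :
  (\sum_(l < k) nat_of_bool (b l) == 1)%N -> b l1 -> b l2 -> l1 = l2.
Proof.
move=> hs h1 h2; case: (l1 =P l2) => // /eqP; rewrite eq_sym => ne; move: hs.
rewrite (bigD1 l1) //= (bigD1 l2) /=; last by rewrite ne.
by rewrite h1 h2 !add1n eqSS.
Qed.

Lemma sumb_ex (b : 'I_k -> bool) :
  (\sum_(l < k) nat_of_bool (b l) == 1)%N -> exists l, b l.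
Proof.
move=> hs; case: (boolP [exists l, b l]) => [/existsP //| /existsPn h0]; move: hs.
by rewrite big1 // => l _; rewrite (negbTE (h0 l)).
Qed.

Lemma sumb_one (b : 'I_k -> bool) l1 : b l1 -> (forall l, l != l1 -> ~~ b l) ->
  (\sum_(l < k) nat_of_bool (b l) == 1)%N.
Proof.
move=> h1 h; rewrite (bigD1 l1) //= big1 ?h1 // => l hl.
by rewrite (negbTE (h l hl)).
Qed.

Lemma inC_Pr (V : FV) : inC (one_md n) (Pr V).
Proof. by apply: inC_prod => l _; apply: inC_xat. Qed.

Lemma step (hn : (0 < n)%N) (V : FV) :
  (forall V' : FV, (meas V' < meas V)%N -> Bd (Pr V' - T V')) -> Bd (Pr V - T V).
Proof.
move=> IH; case hv: (validW V).
  rewrite /T (eq_bigl (pred1 V)) ?big_pred1_eq ?subrr; first exact: Bd0.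
  move=> W /=; apply/idP/eqP => [/andP [hle hval] | ->]; last first.
    by rewrite hv andbT; apply/leWP.
  apply/ffunP => l; apply/ffunP => i; apply/idP/idP => [/(leW_app hle l i) // | hV].
  have [l' hl'] := sumb_ex (forallP hval i).
  have e := sumb_two (forallP hv i) hV (leW_app hle l' i hl').
  by rewrite e.
move/negbT: hv => /forallPn [i hi].
case: (boolP [exists l, V l i]) => [/existsP [l1 h1] | /existsPn h0]; last first.
  have eZ : Zm i (Pr V) = Pr V.
    rewrite /Pr Zm_prod; apply: eq_bigr => l _; rewrite Zm_xat; congr xat.
    apply/ffunP => i'; rewrite ffunE; case: (i' =P i) => [->|ne] /=.
      by rewrite (negbTE (h0 l)).
    by [].
  have hT : T V = 0.
    rewrite /T big_pred0 // => W; apply/negbTE/negP => /andP [hle hval].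
    have [l hl] := sumb_ex (forallP hval i).
    by have := h0 l; rewrite (leW_app hle l i hl).
  have := K i hn (@inC_Pr V) (@inC1 (one_md n)); rewrite eZ Zm1 !mulr1 subrr add0r.
  by rewrite hT subr0.
case: (boolP [exists l2, (l2 != l1) && V l2 i]) => [/existsP [l2 /andP [ne h2]] | /existsPn hno]; last first.
  exfalso; move/negP: hi; apply; apply: (sumb_one h1) => l hl.
  by have := hno l; rewrite hl.
pose Va : FV := [ffun l => if l == l1 then clrb i (V l) else V l].
pose Vb : FV := [ffun l => if l == l1 then V l else clrb i (V l)].
pose Q := xat (X l1) (V l1).
pose R := \prod_(l < k | l != l1) xat (X l) (V l).
have ePV : Pr V = Q * R by rewrite /Pr (bigD1 l1).
have ePa : Pr Va = Zm i Q * R.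
  rewrite /Pr (bigD1 l1) //= ffunE eqxx Zm_xat; congr (_ * _).
  by apply: eq_bigr => l hl; rewrite ffunE (negbTE hl).
have ePb : Pr Vb = Q * Zm i R.
  rewrite /Pr (bigD1 l1) //= ffunE eqxx Zm_prod; congr (_ * _).
  by apply: eq_bigr => l hl; rewrite ffunE (negbTE hl) Zm_xat.
have hK : Bd (Zm i Q * R - Q * R + Q * Zm i R).
  by apply: K => //; [exact: inC_xat | apply: inC_prod => l _; exact: inC_xat].
have eT : T V = T Va + T Vb.
  rewrite /T (bigID (fun W : FV => W l1 i)) /= addrC; congr (_ + _); apply: eq_bigl => W.
    apply/idP/idP.
      case/andP => [/andP [hle hval] hw]; apply/andP; split => //.
      apply/leWP => l i' hW; rewrite ffunE; case: (l =P l1) => [e|_].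
        subst l; rewrite ffunE; apply/andP; split; last exact: (leW_app hle _ _ hW).
        by apply/eqP => e; subst i'; rewrite hW in hw.
      exact: (leW_app hle _ _ hW).
    case/andP => hle hval; apply/andP; split; first (apply/andP; split => //).
      apply/leWP => l i' hW; have := leW_app hle l i' hW; rewrite ffunE.
      by case: ifP => _ //; rewrite ffunE => /andP [_ ->].
    apply/negP => hW; have := leW_app hle l1 i hW; rewrite ffunE eqxx ffunE eqxx.
    by [].
  apply/idP/idP.
    case/andP => [/andP [hle hval] hw]; apply/andP; split => //.
    apply/leWP => l i' hW; rewrite ffunE; case: (l =P l1) => [e|nl].
      by subst l; exact: (leW_app hle _ _ hW).
    rewrite ffunE; apply/andP; split; last exact: (leW_app hle _ _ hW).
    apply/eqP => e; subst i'; apply: nl.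
    exact: (sumb_two (forallP hval i) hW hw).
  case/andP => hle hval; apply/andP; split; first (apply/andP; split => //).
    apply/leWP => l i' hW; have := leW_app hle l i' hW; rewrite ffunE.
    by case: ifP => _ //; rewrite ffunE => /andP [_ ->].
  have [l hl] := sumb_ex (forallP hval i).
  have := leW_app hle l i hl; rewrite ffunE; case: (l =P l1) => [<- //|_].
  by rewrite ffunE eqxx.
have hma : (meas Va < meas V)%N.
  apply: proper_card; apply/properP; split.
    apply/subsetP => [[l i']]; rewrite !inE /= ffunE.
    by case: ifP => _ //; rewrite ffunE => /andP [_ ->].
  by exists (l1, i); rewrite !inE /= ?h1 // ffunE eqxx ffunE eqxx.
have hmb : (meas Vb < meas V)%N.
  apply: proper_card; apply/properP; split.
    apply/subsetP => [[l i']]; rewrite !inE /= ffunE.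
    by case: ifP => _ //; rewrite ffunE => /andP [_ ->].
  by exists (l2, i); rewrite !inE /= ?h2 // ffunE (negbTE ne) ffunE eqxx.
have -> : Pr V - T V =
   (Pr Va - T Va) + (Pr Vb - T Vb) - (Zm i Q * R - Q * R + Q * Zm i R).
  by rewrite eT ePV ePa ePb; ring.
by apply: BdB => //; apply: BdD; apply: IH.
Qed.

Lemma main_prod (hn : (0 < n)%N) (V : FV) : Bd (Pr V - T V).
Proof.
move: {2}(meas V) (leqnn (meas V)) => m; elim: m V => [|m IH] V hm; apply: step => // V' hV'.
  by move: (leq_trans hV' hm).
by apply: IH; rewrite -ltnS (leq_trans hV' hm).
Qed.

End Prod.

End S.

Lemma homolB n (p q : Pol n n.+1) : Bd (p - q) -> homol p q.
Proof. by []. Qed.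

Lemma ZmM n i (p q : Pol n n.+1) : Zm i (p * q) = Zm i p * Zm i q.
Proof. by rewrite /Zm rmorphM. Qed.

Lemma clrb_id n i (v : bv n) : v i = false -> clrb i v = v.
Proof.
move=> h; apply/ffunP => k; rewrite ffunE; case: (k =P i) => [->|/eqP ne] /=.
  by rewrite ?eqxx h.
by rewrite ?ne.
Qed.

Lemma Bd_fix n (hn : (1 <= n)%N) i (p : Pol n n.+1) :
  inC (one_md n) p -> Zm i p = p -> Bd p.
Proof.
move=> hp hz; have := @K n i p 1 hn hp (@inC1 n (one_md n)).
by rewrite Zm1 hz !mulr1 subrr add0r.
Qed.

Lemma part1a n (hn : (1 <= n)%N) (v w : bv n) (x y : {poly rat}) (i : 'I_n) :
  v i = false -> w i = false -> homol (xat x v * xat y w) 0.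
Proof.
move=> hv hw; apply: homolB; rewrite subr0; apply: (Bd_fix hn (i := i)).
  by apply: inCM; apply: inC_xat.
by rewrite ZmM !Zm_xat !clrb_id.
Qed.

Lemma part1b n (hn : (1 <= n)%N) (v : bv n) (x : {poly rat}) :
  v != bv_one n -> homol (xat x v) 0.
Proof.
move=> hv; have [i hi] : exists i, v i = false.
  case: (boolP [exists i, ~~ v i]) => [/existsP [i /negbTE hi]|/existsPn h]; first by exists i.
  by case/eqP: hv; apply/ffunP => i; rewrite ffunE; have := h i; rewrite negbK.
apply: homolB; rewrite subr0; apply: (Bd_fix hn (i := i)); first exact: inC_xat.
by rewrite Zm_xat clrb_id.
Qed.

Lemma forall2 (F : 'I_2 -> bool) : [forall l, F l] = F ord0 && F ord_max.
Proof.
apply/forallP/andP => [h|[h0 h1] l]; first by split; apply: h.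
by case: l => [[|[|m]] Hm] //; [have -> : Ordinal Hm = ord0 by apply/val_inj
                                |have -> : Ordinal Hm = ord_max by apply/val_inj].
Qed.

Lemma part2 n (hn : (1 <= n)%N) (v w : bv n) (x y : {poly rat}) :
      homol (xat x v * xat y w)
        (\sum_(v' : bv n | [forall i, v' i ==> v i])
           \sum_(w' : bv n | [forall i, w' i ==> w i] &&
                             [forall i, (v' i + w' i == 1)%N])
              xat x v' * xat y w').
Proof.
pose X : 'I_2 -> {poly rat} := fun l => if val l == 0%N then x else y.
pose h : bv n * bv n -> {ffun 'I_2 -> bv n} :=
  fun p => [ffun l => if val l == 0%N then p.1 else p.2].
have hPr : forall p, Pr X (h p) = xat x p.1 * xat y p.2.
  by move=> p; rewrite /Pr !big_ord_recr big_ord0 /= mul1r !ffunE.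
have hbij : bijective h.
  exists (fun W : {ffun 'I_2 -> bv n} => (W ord0, W ord_max)) => [[a b]|W]; first by rewrite /h !ffunE.
  apply/ffunP => l; rewrite ffunE; case: l => [[|[|m]] Hm] //=.
    by congr (W _); apply/val_inj.
  by congr (W _); apply/val_inj.
have := main_prod X hn (h (v, w)); rewrite hPr /=.
suff -> : T X (h (v, w)) = \sum_(v' : bv n | [forall i, v' i ==> v i])
           \sum_(w' : bv n | [forall i, w' i ==> w i] &&
                             [forall i, (v' i + w' i == 1)%N])
              xat x v' * xat y w' by [].
rewrite pair_big_dep /T (reindex h) /=; last exact: onW_bij.
apply: eq_big => [p|p _]; last by rewrite hPr.
have eq_le : leW (h p) (h (v,w)) = [forall i, p.1 i ==> v i] && [forall i, p.2 i ==> w i].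
  by rewrite /leW forall2; congr andb; apply: eq_forallb => i; rewrite !ffunE.
have eq_val : validW (h p) = [forall i, (p.1 i + p.2 i == 1)%N].
  by rewrite /validW; apply: eq_forallb => i; rewrite !big_ord_recr big_ord0 /= !ffunE.
by rewrite eq_le eq_val andbA.
Qed.

Lemma xatM n x y (v : bv n) : xat (x * y) v = xat x v * xat y v.
Proof. by rewrite /xat; case: ifP => _; rewrite ?rmorphM /= ?hornerM ?rmorphM. Qed.

Lemma xat1 n (v : bv n) : xat 1 v = 1.
Proof. by rewrite /xat; case: ifP => _; rewrite ?rmorph1 ?hornerC ?rmorph1. Qed.

Lemma xatX n x k (v : bv n) : xat (x ^+ k) v = xat x v ^+ k.
Proof.
elim: k => [|k ih]; first by rewrite !expr0 xat1.
by rewrite !exprS xatM ih.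
Qed.

Lemma part3 n (hn : (1 <= n)%N) k : (1 <= k)%N ->
      homol (xat ('X ^+ k) (bv_one n))
        (\sum_(ws : {ffun 'I_k -> bv n} |
                 [forall l, bv_nz (ws l)] &&
                 [forall i, (\sum_(l < k) nat_of_bool (ws l i) == 1)%N])
           \prod_(l < k) xat 'X (ws l)).
Proof.
move=> hk; pose X : 'I_k -> {poly rat} := fun _ => 'X.
pose V : {ffun 'I_k -> bv n} := [ffun _ => bv_one n].
have := main_prod X hn V.
have -> : Pr X V = xat ('X ^+ k) (bv_one n).
  by rewrite /Pr /X; under eq_bigr do rewrite ffunE; rewrite big_const_ord iter_mulr_1 xatX.
move=> h; apply: homolB; move: h.
suff -> : T X V = \sum_(ws : {ffun 'I_k -> bv n} |
                 [forall l, bv_nz (ws l)] &&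
                 [forall i, (\sum_(l < k) nat_of_bool (ws l i) == 1)%N])
           \prod_(l < k) xat 'X (ws l) by [].
rewrite /T big_mkcond [RHS]big_mkcond; apply: eq_bigr => W _.
have -> : leW W V by apply/leWP => l i _; rewrite !ffunE.
rewrite (_ : [forall i, (\sum_(l < k) nat_of_bool (W l i) == 1)%N] = validW W) //=.
case: (validW W); rewrite ?andbT ?andbF //.
case: ifP => // /negbT /forallPn [l hl].
rewrite /Pr (bigD1 l) //= /X /xat (negbTE hl) hornerX.
by rewrite mul0r.
Qed.

Lemma cond_inj n (hn : (1 <= n)%N) k (ws : {ffun 'I_k -> bv n}) :
  [forall l, bv_nz (ws l)] ->
  [forall i, (\sum_(l < k) nat_of_bool (ws l i) == 1)%N] ->
  exists f : 'I_k -> 'I_n, injective f /\ forall l, ws l (f l).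
Proof.
move=> hnz hval.
pose f l := odflt (Ordinal hn) [pick i | ws l i].
have hf : forall l, ws l (f l).
  move=> l; rewrite /f; case: pickP => [i hi //|h0].
  by move: (forallP hnz l) => /existsP [i hi]; rewrite h0 in hi.
exists f; split => // l1 l2 e.
apply: (sumb_two (forallP hval (f l1)) (hf l1)); rewrite e; exact: hf.
Qed.

Lemma part3c n (hn : (1 <= n)%N) k : (n < k)%N -> homol (xat ('X ^+ k) (bv_one n)) 0.
Proof.
move=> hk; have hk1 : (1 <= k)%N by apply: leq_trans hk.
have := part3 hn hk1; rewrite big_pred0 // => ws.
apply/negbTE/negP => /andP [hnz hval].
have [f [fi _]] := cond_inj hn hnz hval.
by have := @leq_card _ _ f fi; rewrite !card_ord leqNgt hk.
Qed.

Lemma bv_eE n (i j : 'I_n) : bv_e i j = (j == i).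
Proof. by rewrite ffunE. Qed.

Lemma part3b n (hn : (1 <= n)%N) :
  homol (xat ('X ^+ n) (bv_one n)) (n`!%:R * \prod_(i < n) xat 'X (bv_e i)).
Proof.
have := part3 hn hn.
pose h (s : {perm 'I_n}) : {ffun 'I_n -> bv n} := [ffun l => bv_e (s l)].
have hinj : injective h.
  move=> s1 s2 e; apply/permP => l.
  have := congr1 (fun W : {ffun 'I_n -> bv n} => W l (s1 l)) e.
  by rewrite /= !ffunE eqxx => /esym /eqP.
set S := (X in homol _ X -> _).
suff -> : S = n`!%:R * \prod_(i < n) xat 'X (bv_e i) by [].
rewrite /S (eq_bigl (mem (h @: setT))); last first.
  move=> ws /=; apply/idP/idP.
    case/andP => hnz hval; have [f [fi hf]] := cond_inj hn hnz hval.
    apply/imsetP; exists (perm fi); first by rewrite inE.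
    apply/ffunP => l; apply/ffunP => i; rewrite !ffunE permE.
    apply/idP/eqP => [hw|->]; last exact: hf.
    have e1 : f (((perm fi)^-1)%g i) = i by rewrite -[RHS](permKV (perm fi)) permE.
    have := hf (((perm fi)^-1)%g i); rewrite e1 => hw'.
    by rewrite (sumb_two (forallP hval i) hw hw') e1.
  case/imsetP => s _ ->; apply/andP; split.
    by apply/forallP => l; apply/existsP; exists (s l); rewrite !ffunE eqxx.
  apply/forallP => i; apply: (@sumb_one _ _ ((s^-1)%g i)); first by rewrite !ffunE permKV eqxx.
  move=> l hl; rewrite !ffunE; apply/negP => /eqP e.
  by move/eqP: hl; apply; rewrite e permK.
rewrite big_imset /=; last by move=> s1 s2 _ _; apply: hinj.
have eC : forall s : {perm 'I_n}, \prod_(l < n) xat 'X (h s l) = \prod_(i < n) xat 'X (bv_e i).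
  move=> s; rewrite [RHS](reindex_inj (@perm_inj _ s)); apply: eq_bigr => l _.
  by rewrite ffunE.
under eq_bigr do rewrite eC.
by rewrite sumr_const cardsT card_Sn mulr_natl.
Qed.

Theorem proposition4p9 (n : nat) (hn : (1 <= n)%N) :
  (* (1) *)
  (forall (v w : bv n) (x y : {poly rat}) (i : 'I_n),
      v i = false -> w i = false -> homol (xat x v * xat y w) 0) /\
  (forall (v : bv n) (x : {poly rat}), v != bv_one n -> homol (xat x v) 0) /\
  (* (2) *)
  (forall (v w : bv n) (x y : {poly rat}),
      homol (xat x v * xat y w)
        (\sum_(v' : bv n | [forall i, v' i ==> v i])
           \sum_(w' : bv n | [forall i, w' i ==> w i] &&
                             [forall i, (v' i + w' i == 1)%N])
              xat x v' * xat y w')) /\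
  (* (3) *)
  (forall k : nat, (1 <= k)%N ->
      homol (xat ('X ^+ k) (bv_one n))
        (\sum_(ws : {ffun 'I_k -> bv n} |
                 [forall l, bv_nz (ws l)] &&
                 [forall i, (\sum_(l < k) nat_of_bool (ws l i) == 1)%N])
           \prod_(l < k) xat 'X (ws l))) /\
  homol (xat ('X ^+ n) (bv_one n)) (n`!%:R * \prod_(i < n) xat 'X (bv_e i)) /\
  (forall k : nat, (n < k)%N -> homol (xat ('X ^+ k) (bv_one n)) 0).
Proof.
split; first by move=> v w x y i hv hw; exact: (@part1a n hn v w x y i hv hw).
split; first by move=> v x hv; exact: (@part1b n hn v x hv).
split; first by move=> v w x y; exact: (@part2 n hn v w x y).
split; first by move=> k hk; exact: (@part3 n hn k hk).
split; first exact: (@part3b n hn).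
by move=> k hk; exact: (@part3c n hn k hk).
Qed.
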